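(* Let $f=\sum_{J\in\mathbb{N}^n} a_J x^J$ be a nonzero real polynomial with all coefficients $a_J\in\{0,1\}$, let $\mathcal{M}$ be the set of exponent vectors $P$ with $a_P=1$, and fix an integer $k\ge 0$. Let $M$ be the matrix whose rows are indexed by the vectors $I\in\{0,1\}^n$ with $|I|=k$, whose columns are indexed by the finitely many $J\in\mathbb{N}^n$ such that $I+J\in\mathcal{M}$ for some such $I$, and whose entries are $M_{I,J}=a_{I+J}$. Let $B=M^T M$. Then $$\mathrm{Tr}(B^2)\leq |\mathcal{M}|^2\sum_{P \in \mathcal{M}} \binom{\sup(P)}{k}.$$
   Context: For $\alpha\in\mathbb{N}^n$, $x^\alpha = x_1^{\alpha_1}\cdots x_n^{\alpha_n}/(\alpha_1!\cdots\alpha_n!)$ (scaled monomial basis). For $I\in\{0,1\}^n$, $|I|=\sum_i I_i$. For $P\in\mathbb{N}^n$, $\sup(P)$ is the number of indices $i$ with $P_i>0$. *)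

(* Defs.v *)
From HB Require Import structures.
From mathcomp Require Import all_boot all_order all_algebra.
From mathcomp Require Import mpoly.
Set Implicit Arguments. Unset Strict Implicit. Unset Printing Implicit Defensive.
Import Order.TTheory GRing.Theory Num.Theory.
Local Open Scope ring_scope.

(* Coefficient a_J of f in the scaled monomial basis x^J / (J_1! ... J_n!):
   f = sum_J f@_J * prod x_i^{J_i} = sum_J (J! f@_J) * (x^J / J!). *)
Definition scoef {R : realFieldType} {n : nat} (f : {mpoly R[n]}) (J : 'X_{1..n}) : R :=
  (\prod_(i < n) (J i)`!)%N%:R * f@_J.

Definition Mset {R : realFieldType} {n : nat} (f : {mpoly R[n]}) : seq 'X_{1..n} :=
  [seq P <- msupp f | scoef f P == 1].

Definition bin_mnm {n : nat} (b : {ffun 'I_n -> bool}) : 'X_{1..n} :=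
  [multinom (nat_of_bool (b i)) | i < n].

Definition rowsI (n k : nat) : seq 'X_{1..n} :=
  [seq I <- map (@bin_mnm n) (enum {ffun 'I_n -> bool}) | (mdeg I == k)%N].

Definition colsJ {R : realFieldType} {n : nat} (f : {mpoly R[n]}) (k : nat)
  : seq 'X_{1..n} :=
  undup [seq J <- [seq (P - Ir)%MM | P <- Mset f, Ir <- rowsI n k]
        | has (fun Ir => (Ir + J)%MM \in Mset f) (rowsI n k)].

Definition Mmat {R : realFieldType} {n : nat} (f : {mpoly R[n]}) (k : nat)
  : 'M[R]_(size (rowsI n k), size (colsJ f k)) :=
  \matrix_(i, j) scoef f (nth 0%MM (rowsI n k) i + nth 0%MM (colsJ f k) j)%MM.

Definition msup {n : nat} (P : 'X_{1..n}) : nat := #|[set i : 'I_n | (0 < P i)%N]|.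

(* Main.v *)
Require Import Defs.
From HB Require Import structures.
From mathcomp Require Import all_boot all_order all_algebra.
From mathcomp Require Import mpoly.
Import Order.TTheory GRing.Theory Num.Theory.

Lemma sumb_count (T : Type) (s : seq T) (a : pred T) :
  (\sum_(x <- s) (a x : nat))%N = count a s.
Proof. by elim: s => [|x s IH]; rewrite ?big_nil ?big_cons //= IH. Qed.


Lemma sum_add_in (n : nat) (s Ms : seq 'X_{1..n}) (X : 'X_{1..n}) :
  uniq s -> (\sum_(I <- s) (((I + X)%MM \in Ms) : nat) <= size Ms)%N.
Proof.
move=> us; rewrite sumb_count -size_filter.
rewrite -(size_map (fun I => (I + X)%MM)).
apply: uniq_leq_size.
  by rewrite map_inj_uniq ?filter_uniq //; apply: can_inj (addmK X).
by move=> y /mapP [I]; rewrite mem_filter => /andP [h _] ->.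
Qed.

Lemma sum_eq_le (n : nat) (c : seq 'X_{1..n}) (I P : 'X_{1..n}) :
  uniq c -> (\sum_(J <- c) ((I + J)%MM == P : nat) <= (I <= P)%MM)%N.
Proof.
move=> uc.
have h : forall J, ((I + J)%MM == P : nat) <= ((I <= P)%MM * (J == (P - I)%MM))%N.
  move=> J; case: eqP => //= <-; rewrite lem_addr /= mul1n.
  by rewrite addmC addmK eqxx.
apply: leq_trans (@leq_sum _ c xpredT _ _ (fun J _ => h J)) _.
rewrite -big_distrr /= sumb_count.
have -> : count (fun J => J == (P - I)%MM) c = count_mem (P - I)%MM c.
  by apply: eq_count => J.
rewrite count_uniq_mem //.
by case: (I <= P)%MM; case: (_ \in _).
Qed.

Lemma count_enumT (T : finType) (a : pred T) : count a (enum T) = #|a|.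
Proof. by rewrite cardE enumT /enum_mem size_filter. Qed.

Lemma bin_mnm_inj n : injective (@bin_mnm n).
Proof.
move=> b b' /(congr1 (fun m : 'X_{1..n} => m)) => h; apply/ffunP => i.
have := congr1 (fun m : 'X_{1..n} => m i) h; rewrite /bin_mnm !mnmE.
by case: (b i); case: (b' i).
Qed.

Lemma rowsI_uniq n k : uniq (rowsI n k).
Proof.
by rewrite /rowsI filter_uniq // map_inj_uniq ?enum_uniq //; apply: bin_mnm_inj.
Qed.

Lemma mdeg_bin n (b : {ffun 'I_n -> bool}) : mdeg (bin_mnm b) = #|[set i | b i]|.
Proof.
rewrite mdegE -sum1_card [RHS]big_mkcond /=.
by apply: eq_bigr => i _; rewrite /bin_mnm mnmE inE; case: (b i).
Qed.

Lemma count_rows n k (P : 'X_{1..n}) :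
  (count (fun I => (I <= P)%MM) (rowsI n k) <= 'C(msup P, k))%N.
Proof.
rewrite /rowsI count_filter count_map count_enumT /msup -cards_draws.
set A := preim _ _.
rewrite -(@card_in_imset _ _ (fun b : {ffun 'I_n -> bool} => [set i | b i]) A).
  apply: subset_leq_card; apply/subsetP => S /imsetP [b].
  rewrite /A /= => /andP [hle hd] ->.
  rewrite inE -mdeg_bin hd andbT; apply/subsetP => i; rewrite !inE => hb.
  move/mnm_lepP: hle => /(_ i); rewrite /bin_mnm mnmE hb.
  done.
move=> b b' _ _ h; apply/ffunP => i.
by move/setP: h => /(_ i); rewrite !inE.
Qed.

Local Open Scope ring_scope.

Theorem lemma3 (R : realFieldType) (n : nat) (f : {mpoly R[n]}) (k : nat)
  (hf0 : f != 0)
  (h01 : forall J : 'X_{1..n}, scoef f J = 0 \/ scoef f J = 1) :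
  let B := (Mmat f k)^T *m Mmat f k in
  \tr (B *m B) <=
    ((size (Mset f)) ^ 2)%N%:R * (\sum_(P <- Mset f) 'C(msup P, k))%N%:R.
Proof.
cbv zeta; set B := (Mmat f k)^T *m Mmat f k.
set r := rowsI n k; set c := colsJ f k; set Ms := Mset f.
pose x (i : 'I_(size r)) (j : 'I_(size c)) : nat :=
  ((nth 0%MM r i + nth 0%MM c j)%MM \in Ms).
have hM : forall i j, Mmat f k i j = (x i j)%:R.
  move=> i j; rewrite mxE /x /Ms /Mset mem_filter.
  set P := (_ + _)%MM.
  case: (h01 P) => hP; rewrite hP; first by rewrite eq_sym oner_eq0.
  rewrite eqxx /= mcoeff_msupp.
  have h0 : f@_P != 0.
    apply/eqP => h0; move: hP; rewrite /scoef h0 mulr0 => /eqP.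
    by rewrite eq_sym oner_eq0.
  by rewrite h0.
pose y j l := (\sum_i x i j * x i l)%N.
have hB : forall j l, B j l = (y j l)%:R.
  move=> j l; rewrite /B !mxE natr_sum; apply: eq_bigr => i _.
  by rewrite [(Mmat f k)^T j i]mxE !hM natrM.
have -> : \tr (B *m B) = (\sum_j \sum_l (y j l) ^ 2)%N%:R.
  rewrite /mxtrace natr_sum; apply: eq_bigr => j _.
  rewrite mxE natr_sum; apply: eq_bigr => l _.
  rewrite !hB -natrM; congr (_%:R).
  rewrite /y -mulnn; congr (_ * _)%N; apply: eq_bigr => i _; exact: mulnC.
rewrite -natrM ler_nat.
set m := size Ms.
have uc : uniq c by exact: undup_uniq.
have col : forall j, (\sum_i x i j <= m)%N.
  move=> j; have := @sum_add_in n r Ms (nth 0%MM c j) (rowsI_uniq n k).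
  by rewrite (big_nth 0%MM) big_mkord.
have row : forall i, (\sum_j x i j <= m)%N.
  move=> i; have := @sum_add_in n c Ms (nth 0%MM r i) uc.
  rewrite (big_nth 0%MM) big_mkord; apply: leq_trans; apply: eq_leq.
  by apply: eq_bigr => j _; rewrite /x addmC.
have hy : forall j l, (y j l ^ 2 <= m * y j l)%N.
  move=> j l; rewrite -mulnn leq_mul2r; apply/orP; right.
  apply: leq_trans (col j); apply: leq_sum => i _.
  by rewrite -{2}(muln1 (x i j)) leq_mul2l leq_b1 orbT.
have hex : (\sum_j \sum_l y j l = \sum_i (\sum_j x i j) * (\sum_l x i l))%N.
  rewrite /y; under eq_bigr do rewrite exchange_big.
  rewrite exchange_big; apply: eq_bigr => i _.
  rewrite big_distrl; apply: eq_bigr => j _; rewrite big_distrr //.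
have tot : (\sum_i \sum_j x i j <= \sum_(P <- Ms) 'C(msup P, k))%N.
  have -> : (\sum_i \sum_j x i j =
      \sum_(I <- r) \sum_(J <- c) ((I + J)%MM \in Ms : nat))%N.
    rewrite [RHS](big_nth 0%MM) big_mkord; apply: eq_bigr => i _.
    by rewrite (big_nth 0%MM) big_mkord.
  have ms : uniq Ms by rewrite /Ms /Mset filter_uniq // msupp_uniq.
  have e : forall I J : 'X_{1..n},
      ((I + J)%MM \in Ms : nat) = (\sum_(P <- Ms) ((I + J)%MM == P : nat))%N.
    move=> I J; rewrite sumb_count -count_uniq_mem //.
    by apply: eq_count => P /=; rewrite eq_sym.
  under eq_bigr do under eq_bigr do rewrite e.
  under eq_bigr do rewrite exchange_big.
  rewrite exchange_big; apply: leq_sum => P _.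
  apply: (@leq_trans (\sum_(I <- r) ((I <= P)%MM : nat))).
    by apply: leq_sum => I _; apply: sum_eq_le.
  by rewrite sumb_count count_rows.
apply: (@leq_trans (\sum_j \sum_l m * y j l)%N).
  by apply: leq_sum => j _; apply: leq_sum => l _; apply: hy.
rewrite (eq_bigr (fun j => m * \sum_l y j l)%N); last by move=> j _; rewrite big_distrr.
rewrite -big_distrr hex -mulnn -mulnA leq_mul2l; apply/orP; right.
apply: (@leq_trans (\sum_i m * \sum_j x i j)%N).
  by apply: leq_sum => i _; rewrite leq_mul2r row orbT.
by rewrite -big_distrr leq_mul2l tot orbT.
Qed.
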